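(* Let $F_j$ denote the ordinary Fibonacci numbers ($F_1=F_2=1$, $F_{j+1}=F_j+F_{j-1}$). For integers $m\ge1$ and $N\ge1$ let $$S_m(N)=\sum_{\substack{j_1,\dots,j_m\ge1\\ j_1+\cdots+j_m=N}}F_{j_1}F_{j_2}\cdots F_{j_m}.$$ Then for all integers $m\ge1$, $n\ge0$, $$S_m(n+m)=(-i)^nC_n^{m}(i/2)=\frac{(2m)_n}{2^n}\sum_{r=0}^{\lfloor n/2\rfloor}\frac{(5/4)^r}{r!\,(m+1/2)_r\,(n-2r)!}.$$ *)

(* Defs.v *)
From HB Require Import structures.
From mathcomp Require Import all_boot all_order all_algebra all_field.
Set Implicit Arguments. Unset Strict Implicit. Unset Printing Implicit Defensive.
Import Order.TTheory GRing.Theory Num.Theory.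

Fixpoint fib (n : nat) : nat :=
  match n with
  | 0 => 0
  | 1 => 1
  | (k.+1 as p).+1 => fib p + fib k
  end.

Definition Sfib (m N : nat) : nat :=
  \sum_(f : {ffun 'I_m -> 'I_N.+1} |
          [forall i, 0 < val (f i)] && (\sum_(i < m) val (f i) == N))
     \prod_(i < m) fib (f i).

Local Open Scope ring_scope.

Definition rising (a : algC) (n : nat) : algC := \prod_(k < n) (a + k%:R).

(* Gegenbauer polynomials C_n^l(x), via the standard three-term recurrence
   C_0 = 1, C_1 = 2 l x,
   n C_n = 2 x (n + l - 1) C_{n-1} - (n + 2 l - 2) C_{n-2}.
   gegen_pair l x n = (C_n^l(x), C_{n+1}^l(x)). *)
Fixpoint gegen_pair (l x : algC) (n : nat) : algC * algC :=
  match n with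
  | 0 => (1, 2 * l * x)
  | k.+1 => let: (a, b) := gegen_pair l x k in
            (b, (2 * x * (k.+1%:R + l) * b - (k%:R + 2 * l) * a) / k.+2%:R)
  end.

Definition gegenbauer (n : nat) (l x : algC) : algC := (gegen_pair l x n).1.

(* Main.v *)
Require Import Defs.
From HB Require Import structures.
From mathcomp Require Import all_boot all_order all_algebra all_field.
From mathcomp Require Import ring lra zify.
Import Order.TTheory GRing.Theory Num.Theory.
Local Open Scope ring_scope.

Definition recP (M : algC) (u : nat -> algC) :=
  forall n, u n.+2 = ((n.+1%:R + M) * u n.+1 + (n%:R + 2 * M) * u n) / n.+2%:R.

Lemma gegen_pairS l x k : gegen_pair l x k.+1 =
  ((gegen_pair l x k).2,
   (2 * x * (k.+1%:R + l) * (gegen_pair l x k).2 - (k%:R + 2 * l) * (gegen_pair l x k).1) / k.+2%:R).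
Proof. by rewrite /=; case: (gegen_pair l x k). Qed.

Lemma gegen_rec (m : nat) : recP m%:R (fun n => (- 'i) ^+ n * gegenbauer n m%:R ('i / 2%:R)).
Proof.
move=> n; rewrite /gegenbauer !gegen_pairS /=.
set a := (gegen_pair _ _ n).1; set b := (gegen_pair _ _ n).2.
have h2 : (2%:R : algC) != 0 by rewrite pnatr_eq0.
have hn : (n.+2%:R : algC) != 0 by rewrite pnatr_eq0.
have e2 : (-'i) ^+ n.+2 = - (-'i) ^+ n :> algC.
  by rewrite exprSr exprSr -mulrA -expr2 sqrrN sqrCi mulrN1.
have ei : 2 * ('i / 2%:R) = 'i :> algC by rewrite mulrC divfK.
rewrite e2 exprSr -mulrA ei.
field. all: try exact hn. all: try exact h2. by rewrite -natrD pnatr_eq0.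
Qed.

Definition tt (M : algC) (n r : nat) : algC :=
  if (2 * r <= n)%N then rising (2 * M) n / 2%:R ^+ n *
    ((5%:R / 4%:R) ^+ r / ((r`!)%:R * rising (M + 2%:R^-1) r * ((n - 2 * r)`!)%:R))
  else 0.

Definition Hh (M : algC) n r :=
  - (2 * r%:R * (2 * M + 2 * r%:R - 1)) / (n%:R + 2 * M + 1) * tt M n.+2 r.

Lemma risingS a n : rising a n.+1 = rising a n * (a + n%:R).
Proof. by rewrite /rising big_ord_recr. Qed.

Lemma ttE M n r k : n = (2 * r + k)%N -> tt M n r = rising (2 * M) n / 2%:R ^+ n *
    ((5%:R / 4%:R) ^+ r / ((r`!)%:R * rising (M + 2%:R^-1) r * (k`!)%:R)).
Proof.
move=> ->; rewrite /tt ifT; last by lia.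
by have -> : (2 * r + k - 2 * r = k)%N by lia.
Qed.

Lemma tt0 M n r : (n < 2 * r)%N -> tt M n r = 0.
Proof. by move=> h; rewrite /tt ifF //; lia. Qed.

Ltac nzC := rewrite -?natrM; try rewrite -[1 : algC]/(1%:R); rewrite -?natrD pnatr_eq0; lia.

Lemma natr_ne0 k : (k.+1%:R : algC) != 0.
Proof. by rewrite pnatr_eq0. Qed.

Lemma pos_ne0 (x : algC) : 0 < x -> x != 0.
Proof. by move=> h; rewrite gt_eqF. Qed.

Lemma rising_ne0 (m : nat) r : rising (m%:R + 2%:R^-1) r != 0.
Proof.
rewrite /rising; apply/prodf_neq0 => i _; apply: pos_ne0.
rewrite -addrA; apply: ltr_wpDl; first exact: ler0n.
by rewrite ltr_pwDl ?ler0n // invr_gt0 ltr0n.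
Qed.

Lemma fact_ne0 k : ((k`!)%:R : algC) != 0.
Proof. by rewrite pnatr_eq0 -lt0n fact_gt0. Qed.

Lemma tele (m n r : nat) :
  n.+2%:R * tt m%:R n.+2 r - (n.+1%:R + m%:R) * tt m%:R n.+1 r - (n%:R + 2 * m%:R) * tt m%:R n r
  = Hh m%:R n r.+1 - Hh m%:R n r.
Proof.
have h2 : (2%:R : algC) != 0 by rewrite pnatr_eq0.
have h4 : (4%:R : algC) != 0 by rewrite pnatr_eq0.
have hq : (5%:R / 4%:R : algC) != 0 by rewrite mulf_neq0 ?invr_eq0 ?pnatr_eq0.
have hmr : forall j : nat, (m%:R + 2%:R^-1 + j%:R : algC) != 0.
  move=> j; apply: pos_ne0; rewrite -addrA; apply: ltr_wpDl; first exact: ler0n.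
  by rewrite ltr_pwDl ?ler0n // invr_gt0 ltr0n.
have hd : (n%:R + 2 * m%:R + 1 : algC) != 0.
  by rewrite -natrM -natrD -[1]/(1%:R) -natrD addn1 natr_ne0.
rewrite /Hh.
case: (leqP (2 * r) n) => hr.
- have [k ek] : exists k, n = (2 * r + k)%N by exists (n - 2 * r)%N; lia.
  subst n.
  rewrite (ttE m%:R (2 * r + k).+2 r k.+2); last by lia.
  rewrite (ttE m%:R (2 * r + k).+2 r.+1 k); last by lia.
  rewrite (ttE m%:R (2 * r + k).+1 r k.+1); last by lia.
  rewrite (ttE m%:R (2 * r + k) r k) //.
  rewrite !risingS !exprS !factS !natrM.
  move: (hmr r) (rising_ne0 m r) (fact_ne0 r) (fact_ne0 k).
  set A := rising _ (2 * r + k); set E := rising _ r.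
  set D := (r`!)%:R; set F := (k`!)%:R.
  have hB : (2%:R ^+ (2 * r + k) : algC) != 0 by rewrite expf_neq0.
  move: hB; set B := 2%:R ^+ _; set C := (_ / _) ^+ r.
  move=> hB h1 h2' h3 h4'.
  field.
  by repeat (apply/andP; split); try assumption; try exact: fact_ne0; nzC.
have [er|er] : ((2 * r = n.+1)%N \/ (n.+1 < 2 * r)%N) by lia.
- rewrite (tt0 m%:R _ _ hr) (tt0 m%:R n.+2 r.+1); last by lia.
  rewrite (ttE m%:R n.+1 r 0); last by lia.
  rewrite (ttE m%:R n.+2 r 1); last by lia.
  have eR : (r%:R : algC) = n.+1%:R / 2.
    by rewrite -er natrM [_ * r%:R]mulrC mulfK.
  rewrite eR !risingS !exprS !factS !natrM.
  move: (rising_ne0 m r) (fact_ne0 r).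
  set A := rising _ n; set E := rising _ r.
  set D := (r`!)%:R.
  have hB : (2%:R ^+ n : algC) != 0 by rewrite expf_neq0.
  move: hB; set B := 2%:R ^+ _; set C := (_ / _) ^+ r.
  move=> hB h2' h3.
  field.
  by repeat (apply/andP; split); try assumption; try exact: fact_ne0; nzC.
have [er'|er'] : ((2 * r = n.+2)%N \/ (n.+2 < 2 * r)%N) by lia.
- rewrite (tt0 m%:R _ _ hr) (tt0 m%:R n.+1 r) ?(tt0 m%:R n.+2 r.+1); try lia.
  rewrite (ttE m%:R n.+2 r 0); last by lia.
  have eR : (r%:R : algC) = n.+2%:R / 2.
    by rewrite -er' natrM [_ * r%:R]mulrC mulfK.
  rewrite eR.
  move: (rising_ne0 m r) (fact_ne0 r).
  set A := rising _ n.+2; set E := rising _ r.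
  set D := (r`!)%:R.
  have hB : (2%:R ^+ n.+2 : algC) != 0 by rewrite expf_neq0.
  move: hB; set B := 2%:R ^+ _; set C := (_ / _) ^+ r.
  move=> hB h2' h3.
  field.
  by repeat (apply/andP; split); try assumption; try exact: fact_ne0; nzC.
rewrite (tt0 m%:R _ _ hr) (tt0 m%:R n.+1 r) ?(tt0 m%:R n.+2 r) ?(tt0 m%:R n.+2 r.+1); try lia.
by rewrite !mulr0 !subrr.
Qed.


Definition cfun (M : algC) (n : nat) : algC :=
  rising (2 * M) n / 2%:R ^+ n *
    \sum_(r < (n./2).+1)
       (5%:R / 4%:R) ^+ r /
       ((r`!)%:R * rising (M + 2%:R^-1) r * ((n - 2 * r)`!)%:R).

Lemma cfun_tt M n R : ((n./2).+1 <= R)%N -> cfun M n = \sum_(r < R) tt M n r.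
Proof.
move=> hR; rewrite /cfun mulr_sumr.
rewrite (eq_bigr (fun r : 'I_(n./2).+1 => tt M n r)); last first.
  move=> r _; rewrite /tt ifT //; have := ltn_ord r; move: (nat_of_ord r) => k; rewrite -divn2; lia.
rewrite (big_ord_widen R (fun r => tt M n r) hR) big_mkcond /=; apply: eq_bigr => r _.
case: ifP => h //.
by rewrite tt0 //; move: h; rewrite -divn2; lia.
Qed.

Lemma cfun_rec (m : nat) : recP m%:R (cfun m%:R).
Proof.
move=> n.
have hn : (n.+2%:R : algC) != 0 by rewrite pnatr_eq0.
rewrite (cfun_tt m%:R n.+2 n.+3) ?(cfun_tt m%:R n.+1 n.+3) ?(cfun_tt m%:R n n.+3);
  try by rewrite -divn2; lia.
have e : \sum_(r < n.+3) (n.+2%:R * tt m%:R n.+2 r - (n.+1%:R + m%:R) * tt m%:R n.+1 r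
   - (n%:R + 2 * m%:R) * tt m%:R n r) = 0.
  rewrite (eq_bigr (fun r : 'I_n.+3 => Hh m%:R n r.+1 - Hh m%:R n r)); last by move=> r _; exact: tele.
  rewrite -(big_mkord xpredT (fun r => Hh m%:R n r.+1 - Hh m%:R n r)) telescope_sumr //.
  rewrite /Hh (tt0 m%:R n.+2 n.+3); last by lia.
  by rewrite !(mulr0n, mulr0, mul0r, oppr0, subr0).
move: e; rewrite !sumrB -!mulr_sumr.
set S2 := \sum_(r < n.+3) tt m%:R n.+2 r.
set S1 := \sum_(r < n.+3) tt m%:R n.+1 r.
set S0 := \sum_(r < n.+3) tt m%:R n r.
move=> e.
have -> : S2 = S2 - (n.+2%:R * S2 - (n.+1%:R + m%:R) * S1 - (n%:R + 2 * m%:R) * S0) / n.+2%:R.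
  by rewrite e mul0r subr0.
field. nzC.
Qed.

Lemma prod_scaleX (I : Type) (r : seq I) (a : I -> algC) (e : I -> nat) :
  \prod_(i <- r) (a i *: ('X^(e i) : {poly algC})) =
  (\prod_(i <- r) a i) *: 'X^(\sum_(i <- r) e i).
Proof.
elim: r => [|x r IH]; first by rewrite !big_nil scale1r expr0.
by rewrite !big_cons IH -scalerAl -scalerAr scalerA exprD.
Qed.

Lemma Sfib_coef m N :
  (Sfib m N)%:R = ((\sum_(j < N.+1) (fib j)%:R *: ('X^j : {poly algC})) ^+ m)`_N.
Proof.
rewrite -[in RHS](card_ord m) -prodr_const bigA_distr_bigA /=.
under eq_bigr do rewrite prod_scaleX.
rewrite coef_sumMXn /Sfib natr_sum.
rewrite [RHS](bigID (fun f : {ffun 'I_m -> 'I_N.+1} => [forall i, (0 < val (f i))%N]) ) /=.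
rewrite [X in _ + X]big1 ?addr0; last first.
  move=> f /andP[_ /forallPn [i]]; rewrite lt0n negbK => /eqP fi.
  by rewrite (bigD1 i) //= fi mul0r.
apply: eq_big => [f|f _]; first by rewrite andbC.
by rewrite natr_prod.
Qed.

Definition Qp (K : nat) : {poly algC} := \poly_(i < K) (fib i.+1)%:R.
Definition Pp : {poly algC} := 1 - 'X - 'X * 'X.

Lemma sumfib_XQ N :
  \sum_(j < N.+1) (fib j)%:R *: ('X^j : {poly algC}) = 'X * Qp N.
Proof.
rewrite /Qp poly_def big_ord_recl /= scale0r add0r mulr_sumr.
by apply: eq_bigr => i _; rewrite exprS scalerAr.
Qed.

Lemma Sfib_Qp m n : (Sfib m (n + m))%:R = (Qp (n + m) ^+ m)`_n.
Proof.
rewrite Sfib_coef sumfib_XQ exprMn coefXnM ifF; last by lia.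
by rewrite addnK.
Qed.

Definition eqK (K : nat) (p q : {poly algC}) := forall j, (j < K)%N -> p`_j = q`_j.

Lemma eqK_mull K r p q : eqK K p q -> eqK K (r * p) (r * q).
Proof.
move=> h j hj; rewrite !coefM; apply: eq_bigr => i _; rewrite h //.
by have := ltn_ord i; lia.
Qed.

Lemma eqK_mulr K r p q : eqK K p q -> eqK K (p * r) (q * r).
Proof. by move=> h; rewrite ![_ * r]mulrC; exact: eqK_mull. Qed.

Lemma eqK_exp K m p q : eqK K p q -> eqK K (p ^+ m) (q ^+ m).
Proof.
move=> h; elim: m => [|m IH] j hj; first by [].
rewrite !exprSr (@eqK_mulr K p _ _ IH) //; exact: (@eqK_mull K (q ^+ m) p q h j hj).
Qed.

Lemma eqK_Qp K1 K2 j : (j < K1)%N -> (j < K2)%N -> eqK j.+1 (Qp K1) (Qp K2).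
Proof.
move=> h1 h2 i hi; rewrite /Qp !coef_poly ifT ?ifT //; lia.
Qed.

Lemma Sfib_QK m n K : (1 <= m)%N -> (n < K)%N -> (Sfib m (n + m))%:R = (Qp K ^+ m)`_n.
Proof.
move=> hm hK; rewrite Sfib_Qp; apply: (@eqK_exp n.+1 m _ _ (@eqK_Qp (n + m) K n _ _) n); lia.
Qed.

Lemma coefPp B j : (Pp * B)`_j.+1 = B`_j.+1 - B`_j - (if j is j'.+1 then B`_j' else 0).
Proof.
rewrite /Pp !mulrBl mul1r -mulrA !coefB !coefXM /=.
by case: j => [|j] //=; rewrite coefXM /=.
Qed.

Lemma coefPp0 B : (Pp * B)`_0 = B`_0.
Proof. by rewrite /Pp !mulrBl mul1r -mulrA !coefB !coefXM /= !subr0. Qed.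

Lemma coefPpSS B j : (Pp * B)`_j.+2 = B`_j.+2 - B`_j.+1 - B`_j.
Proof. exact: coefPp. Qed.

Lemma coefPp1 B : (Pp * B)`_1 = B`_1 - B`_0.
Proof. by rewrite coefPp subr0. Qed.

Lemma fibSS n : fib n.+2 = (fib n.+1 + fib n)%N.
Proof. by []. Qed.

Lemma PpQ K : eqK K (Pp * Qp K) 1.
Proof.
move=> j hj; rewrite coef1.
case: j hj => [|j] hj; first by rewrite coefPp0 /Qp coef_poly hj.
case: j hj => [|j] hj.
  by rewrite coefPp1 /Qp !coef_poly !ifT //; try lia; rewrite subrr.
rewrite coefPpSS /Qp !coef_poly !ifT; try lia.
rewrite fibSS natrD (_ : ((j.+2 == 0)%:R : algC) = 0) //; ring.
Qed.

Lemma eqK_deriv k p q : eqK k.+1 p q -> eqK k p^`() q^`().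
Proof. by move=> h j hj; rewrite !coef_deriv h //; lia. Qed.

Lemma eqK_muln K n p q : eqK K p q -> eqK K (p *+ n) (q *+ n).
Proof. by move=> h j hj; rewrite !coefMn h. Qed.

Lemma dPp : Pp^`() = - (1 + 'X *+ 2).
Proof.
rewrite /Pp !derivE.
ring.
Qed.

Lemma keyrec m k : (1 <= m)%N ->
  eqK k (Pp * (Qp k.+1 ^+ m)^`()) ((1 + 'X *+ 2) * Qp k.+1 ^+ m *+ m).
Proof.
move=> hm; set Q := Qp k.+1.
have h1 := @eqK_deriv k _ _ (PpQ k.+1); rewrite derivM -polyC1 derivC in h1.
have h2 : eqK k (Pp * Q^`()) (- (Pp^`() * Q)).
  move=> j hj; move: (h1 j hj); rewrite coefD coef0 coefN => e.
  by apply/eqP; rewrite -addr_eq0 addrC e.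
rewrite deriv_exp mulrnAr mulrA.
move=> j hj; rewrite (@eqK_muln k m _ _ (@eqK_mulr k (Q ^+ m.-1) _ _ h2) j hj).
suff -> : - (Pp^`() * Q) * Q ^+ m.-1 = (1 + 'X *+ 2) * Q ^+ m by [].
rewrite dPp !mulNr opprK -mulrA; congr (_ * _).
by rewrite -exprS prednK.
Qed.

Lemma coefL (B : {poly algC}) j : ((1 + 'X *+ 2) * B)`_j.+1 = B`_j.+1 + B`_j *+ 2.
Proof. by rewrite mulrDl mul1r coefD mulrnAl coefMn coefXM. Qed.

Lemma coefL0 (B : {poly algC}) : ((1 + 'X *+ 2) * B)`_0 = B`_0.
Proof. by rewrite mulrDl mul1r coefD mulrnAl coefMn coefXM mul0rn addr0. Qed.

Lemma coef0_exp (p : {poly algC}) m : (p ^+ m)`_0 = p`_0 ^+ m.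
Proof.
elim: m => [|m IH]; first by rewrite !expr0 coef1.
by rewrite !exprSr coefM big_ord1 IH.
Qed.


Lemma rec_from_coef (A : {poly algC}) (m n : nat) :
  (Pp * A^`())`_n.+1 = ((1 + 'X *+ 2) * A *+ m)`_n.+1 ->
  A`_n.+2 = ((n.+1%:R + m%:R) * A`_n.+1 + (n%:R + 2 * m%:R) * A`_n) / n.+2%:R.
Proof.
move=> e.
rewrite coefPp coefMn coefL !coef_deriv in e.
have ht : (if n is n'.+1 then A^`()`_n' else 0) = A`_n *+ n.
  by case: (n) => [|n']; [rewrite mulr0n | rewrite coef_deriv].
rewrite ht in e.
move: e; move: (A`_n.+2) (A`_n.+1) (A`_n) => x2 x1 x0 e.
have hn : (n.+2%:R : algC) != 0 by rewrite pnatr_eq0.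
have -> : x2 = x2 - (x2 *+ n.+2 - x1 *+ n.+1 - x0 *+ n - (x1 + x0 *+ 2) *+ m) / n.+2%:R.
  by rewrite e subrr mul0r subr0.
field; nzC.
Qed.

Lemma base_from_coef (A : {poly algC}) (m : nat) :
  A`_0 = 1 -> (Pp * A^`())`_0 = ((1 + 'X *+ 2) * A *+ m)`_0 -> A`_1 = m%:R.
Proof.
by move=> h0 e; rewrite coefPp0 coefMn coefL0 coef_deriv h0 mulr1n in e.
Qed.

Lemma Sfib_rec m : (1 <= m)%N -> recP m%:R (fun n => (Sfib m (n + m))%:R).
Proof.
move=> hm n /=.
have k2 : (n.+2 < n.+3)%N by lia.
have k1 : (n.+1 < n.+3)%N by lia.
have k0 : (n < n.+3)%N by lia.
rewrite (Sfib_QK m n.+2 n.+3 hm k2) (Sfib_QK m n.+1 n.+3 hm k1) (Sfib_QK m n n.+3 hm k0).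
exact: (@rec_from_coef _ m n (keyrec m n.+2 hm n.+1 (ltnSn n.+1))).
Qed.

Lemma Sfib_base m : (1 <= m)%N ->
  (Sfib m (0 + m))%:R = 1 :> algC /\ (Sfib m (1 + m))%:R = m%:R :> algC.
Proof.
move=> hm.
rewrite (Sfib_QK m 0 3 hm (isT : (0 < 3)%N)) (Sfib_QK m 1 3 hm (isT : (1 < 3)%N)).
have h0 : (Qp 3 ^+ m)`_0 = 1 by rewrite coef0_exp /Qp coef_poly /= expr1n.
split => //.
exact: (@base_from_coef _ m h0 (keyrec m 2 hm 0 (ltn0Sn 1))).
Qed.

Lemma rec_uniq M u v : recP M u -> recP M v -> u 0%N = v 0%N -> u 1%N = v 1%N ->
  forall n, u n = v n.
Proof.
move=> hu hv h0 h1.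
have H : forall n, u n = v n /\ u n.+1 = v n.+1.
  elim=> [|n [e1 e2]]; first by split.
  by split => //; rewrite hu hv e1 e2.
by move=> n; case: (H n).
Qed.

Lemma gegen_base (m : nat) :
  (- 'i) ^+ 0 * gegenbauer 0 m%:R ('i / 2%:R) = 1 /\
  (- 'i) ^+ 1 * gegenbauer 1 m%:R ('i / 2%:R) = m%:R.
Proof.
split; first by rewrite expr0 mul1r.
rewrite expr1 /gegenbauer gegen_pairS /=.
have ii : 'i * 'i = -1 :> algC by rewrite -expr2 sqrCi.
have h2 : (2%:R : algC) != 0 by rewrite pnatr_eq0.
rewrite (_ : - 'i * (2 * m%:R * ('i / 2)) = - ('i * 'i) * m%:R); last by field.
by rewrite ii opprK mul1r.
Qed.

Lemma cfun_base (m : nat) : cfun m%:R 0 = 1 /\ cfun m%:R 1 = m%:R.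
Proof.
have h2 : (2%:R : algC) != 0 by rewrite pnatr_eq0.
have f0 : (0`!)%:R = 1 :> algC by [].
have f1 : (1`!)%:R = 1 :> algC by [].
split.
  rewrite /cfun /= big_ord1 /rising !big_ord0 /= !expr0 muln0 sub0n f0. by field.
rewrite /cfun /= big_ord1 /rising big_ord1 big_ord0 /= expr0 expr1 muln0 subn0 f0 addr0. by field.
Qed.

Theorem mainTheorem7 (m n : nat) (hm : (1 <= m)%N) :
  (Sfib m (n + m))%:R = (- 'i) ^+ n * gegenbauer n m%:R ('i / 2%:R) /\
  (- 'i) ^+ n * gegenbauer n m%:R ('i / 2%:R) =
    rising (2 * m%:R) n / 2%:R ^+ n *
    \sum_(r < (n./2).+1)
       (5%:R / 4%:R) ^+ r /
       ((r`!)%:R * rising (m%:R + 2%:R^-1) r * ((n - 2 * r)`!)%:R).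
Proof.
have [s0 s1] := Sfib_base m hm.
have [g0 g1] := gegen_base m.
have [c0 c1] := cfun_base m.
split.
  apply: (@rec_uniq m%:R (fun n => (Sfib m (n + m))%:R)
            (fun n => (- 'i) ^+ n * gegenbauer n m%:R ('i / 2%:R))).
  - exact: (Sfib_rec m hm).
  - exact: gegen_rec.
  - by rewrite s0 g0.
  - by rewrite s1 g1.
apply: (@rec_uniq m%:R (fun n => (- 'i) ^+ n * gegenbauer n m%:R ('i / 2%:R)) (cfun m%:R)).
- exact: gegen_rec.
- exact: cfun_rec.
- by rewrite c0 g0.
- by rewrite c1 g1.
Qed.
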